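(* Let $G$ be a simple undirected graph and let $G'$ be any subgraph of $G$. Then $\rho(M_G(s))\geq \rho(M_{G'}(s))$ for all $s\in(-\infty,0]\cup[1,+\infty)$.
   Context: For a simple undirected graph $G$ on $n$ vertices with adjacency matrix $A$, diagonal degree matrix $D$ and $n\times n$ identity matrix $I$, and a real parameter $s$, the deformed Laplacian matrix of $G$ is $M_G(s)=I-sA+s^2(D-I)$ (for a subgraph $G'$, $M_{G'}(s)$ is formed with the adjacency and degree matrices of $G'$ itself). For a real symmetric matrix $B$, $\rho(B)$ denotes its spectral radius, i.e. its largest eigenvalue $\sup_{|x|=1}\langle x,Bx\rangle$. *)

(* Defs.v *)
From HB Require Import structures.
From mathcomp Require Import all_boot all_order all_algebra.
From mathcomp Require Import boolp classical_sets reals.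
Set Implicit Arguments. Unset Strict Implicit. Unset Printing Implicit Defensive.
Import Order.TTheory GRing.Theory Num.Theory.
Local Open Scope ring_scope.

Definition simple_graph (n : nat) (e : rel 'I_n) : Prop :=
  irreflexive e /\ symmetric e.

Definition adjmx (R : realType) (n : nat) (e : rel 'I_n) : 'M[R]_n :=
  \matrix_(i, j) (e i j)%:R.

Definition deg (n : nat) (e : rel 'I_n) (i : 'I_n) : nat := #|[set j | e i j]|.

Definition degmx (R : realType) (n : nat) (e : rel 'I_n) : 'M[R]_n :=
  \matrix_(i, j) ((i == j)%:R * (deg e i)%:R).

Definition deformed_laplacian (R : realType) (n : nat) (e : rel 'I_n) (s : R) : 'M[R]_n :=
  1%:M - s *: adjmx R e + s ^+ 2 *: (degmx R e - 1%:M).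

(* spectral radius of a real symmetric matrix = its largest (real) eigenvalue *)
Definition rho (R : realType) (n : nat) (B : 'M[R]_n) : R :=
  sup [set a : R | eigenvalue B a].

Definition subgraph_via (n m : nat) (e : rel 'I_n) (e' : rel 'I_m) (f : 'I_m -> 'I_n) : Prop :=
  injective f /\ (forall x y, e' x y -> e (f x) (f y)).

(* Main.v *)
Require Import Defs.
From HB Require Import structures.
From mathcomp Require Import all_boot all_order all_algebra.
From mathcomp Require Import boolp classical_sets reals.
From mathcomp Require Import ring lra.
Set Implicit Arguments. Unset Strict Implicit. Unset Printing Implicit Defensive.
Import Order.TTheory GRing.Theory Num.Theory.
Local Open Scope ring_scope.



Section Forms.
Variable R : realType.

Definition form (k : nat) (A : 'M[R]_k) (u v : 'rV[R]_k) : R := (u *m A *m v^T) 0 0.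
Definition nrm (k : nat) (u : 'rV[R]_k) : R := (u *m u^T) 0 0.

Lemma formE k (A : 'M[R]_k) u v :
  form A u v = \sum_j \sum_i u 0 i * A i j * v 0 j.
Proof.
rewrite /form mxE; apply: eq_bigr => j _; rewrite [X in X * _]mxE mulr_suml [v^T _ _]mxE.
by [].
Qed.

Lemma nrmE k (u : 'rV[R]_k) : nrm u = \sum_i u 0 i ^+ 2.
Proof. by rewrite /nrm mxE; apply: eq_bigr => i _; rewrite !mxE expr2. Qed.

Lemma nrm_ge0 k (u : 'rV[R]_k) : 0 <= nrm u.
Proof. by rewrite nrmE sumr_ge0 // => i _; rewrite sqr_ge0. Qed.

Lemma nrm_gt0 k (u : 'rV[R]_k) : u != 0 -> 0 < nrm u.
Proof.
move=> u0; have [i ui] : exists i, u 0 i != 0.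
  apply/existsP; apply: contraR u0 => /existsPn H; apply/eqP/rowP => i.
  by rewrite mxE; apply/eqP; move: (H i); rewrite negbK.
rewrite nrmE (bigD1 i) //= ltr_wpDr //; first by rewrite sumr_ge0 // => j _; rewrite sqr_ge0.
by rewrite lt_def sqr_ge0 sqrf_eq0 ui.
Qed.

Lemma nrm0 k : nrm (0 : 'rV[R]_k) = 0.
Proof. by rewrite nrmE big1 // => i _; rewrite mxE expr0n. Qed.

Lemma formDl k (A : 'M[R]_k) u1 u2 v : form A (u1 + u2) v = form A u1 v + form A u2 v.
Proof. by rewrite /form !mulmxDl mxE. Qed.
Lemma formZl k (A : 'M[R]_k) a u v : form A (a *: u) v = a * form A u v.
Proof. by rewrite /form -!scalemxAl mxE. Qed.
Lemma formDr k (A : 'M[R]_k) u v1 v2 : form A u (v1 + v2) = form A u v1 + form A u v2.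
Proof. by rewrite /form linearD /= mulmxDr mxE. Qed.
Lemma formZr k (A : 'M[R]_k) a u v : form A u (a *: v) = a * form A u v.
Proof. by rewrite /form linearZ /= -scalemxAr mxE. Qed.
Lemma formDm k (A B : 'M[R]_k) u v : form (A + B) u v = form A u v + form B u v.
Proof. by rewrite /form mulmxDr mulmxDl mxE. Qed.
Lemma formNm k (A : 'M[R]_k) u v : form (- A) u v = - form A u v.
Proof. by rewrite /form mulmxN mulNmx mxE. Qed.
Lemma formZm k (A : 'M[R]_k) a u v : form (a *: A) u v = a * form A u v.
Proof. by rewrite /form -scalemxAr -scalemxAl mxE. Qed.
Lemma form1 k (u v : 'rV[R]_k) : form 1%:M u v = (u *m v^T) 0 0.
Proof. by rewrite /form mulmx1. Qed.
Lemma form_sym k (A : 'M[R]_k) u v : A^T = A -> form A v u = form A u v.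
Proof.
move=> sA; rewrite /form -[in LHS](trmxK (v *m A *m u^T)) [in LHS]mxE.
by rewrite !trmx_mul sA trmxK mulmxA.
Qed.

Lemma form_bound k (A : 'M[R]_k) : exists K, 0 <= K /\ forall x, `|form A x x| <= K * nrm x.
Proof.
exists (\sum_j \sum_i `|A i j|); split.
  by apply: sumr_ge0 => j _; apply: sumr_ge0 => i _.
move=> x; rewrite formE mulr_suml; apply: (le_trans (ler_norm_sum _ _ _)).
apply: ler_sum => j _; rewrite mulr_suml; apply: (le_trans (ler_norm_sum _ _ _)).
apply: ler_sum => i _.
have hi : x 0 i ^+ 2 <= nrm x.
  by rewrite nrmE (bigD1 i) //= lerDl sumr_ge0 // => l _; rewrite sqr_ge0.
have hj : x 0 j ^+ 2 <= nrm x.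
  by rewrite nrmE (bigD1 j) //= lerDl sumr_ge0 // => l _; rewrite sqr_ge0.
rewrite (mulrC (x 0 i)) -mulrA normrM ler_wpM2l //.
rewrite ler_norml; have := sqr_ge0 (x 0 i - x 0 j); have := sqr_ge0 (x 0 i + x 0 j).
rewrite sqrrB sqrrD; move=> h1 h2; apply/andP; split; nra.
Qed.

End Forms.



Section Ray.
Variable R : realType.
Variable k : nat.
Hypothesis k0 : (0 < k)%N.
Variable B : 'M[R]_k.
Hypothesis sB : B^T = B.

Definition RS := [set r : R | exists2 x : 'rV[R]_k, x != 0 & r = form B x x / nrm x]%classic.
Definition mu := sup RS.

Lemma RS_sup : has_sup RS.
Proof.
split.
  exists (form B (const_mx 1 : 'rV[R]_k) (const_mx 1 : 'rV[R]_k) / nrm (const_mx 1 : 'rV[R]_k)); exists (const_mx 1 : 'rV[R]_k) => //.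
  apply/eqP => /rowP /(_ (Ordinal k0)); rewrite !mxE => /eqP; by rewrite oner_eq0.
have [K [K0 HK]] := form_bound B.
exists K => r [x x0 ->]; have N0 := nrm_gt0 x0.
rewrite ler_pdivrMr //; apply: le_trans (HK x); exact: ler_norm.
Qed.

Lemma le_mu x : form B x x <= mu * nrm x.
Proof.
have [->|x0] := eqVneq x 0.
  by rewrite nrm0 mulr0 /form mul0mx mul0mx mxE.
have N0 := nrm_gt0 x0; rewrite -ler_pdivrMr //.
by apply: (sup_upper_bound RS_sup); exists x.
Qed.

Lemma eig_le a : eigenvalue B a -> a <= mu.
Proof.
move=> /eigenvalueP [v vB v0]; have N0 := nrm_gt0 v0.
have : form B v v = a * nrm v by rewrite /form vB -scalemxAl mxE.
move=> h; have := le_mu v; rewrite h ler_pM2r //.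
Qed.

Lemma formS (a : R) (u v : 'rV[R]_k) : form (a%:M) u v = a * (u *m v^T) 0 0.
Proof. by rewrite /form mul_mx_scalar -scalemxAl mxE. Qed.

Lemma mu_eig : eigenvalue B mu.
Proof.
case E : (eigenvalue B mu) => //; move: E; rewrite /eigenvalue /eigenspace => /negbFE.
rewrite kermx_eq0 row_free_unit => Pu.
have PC := mulVmx Pu; set P := B - mu%:M in Pu PC; set C := invmx P in PC.
have sP : P^T = P by rewrite /P linearB /= sB tr_scalar_mx.
have formP : forall u, form P u u = form B u u - mu * nrm u.
  by move=> u; rewrite /P formDm formNm formS.
have Pneg : forall u, form P u u <= 0 by move=> u; rewrite formP subr_le0 le_mu.
have [K [K0 HK]] := form_bound C^T.
have eps0 : 0 < 1 / (K + 1) by rewrite divr_gt0 // ltr_wpDl.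
have [r [x x0 ->] Hr] := sup_adherent eps0 RS_sup.
have N0 := nrm_gt0 x0.
have Hx : - nrm x < form P x x * (K + 1).
  move: Hr; rewrite ltr_pdivlMr // formP.
  have : 1 / (K + 1) * (K + 1) = 1 by rewrite mul1r mulVf // gt_eqF // ltr_wpDl.
  set inv := 1 / (K + 1); set q := form B x x; set N := nrm x.
  have K1 : 0 < K + 1 by rewrite ltr_wpDl.
  move=> h1 h2; have h3 : (sup RS - inv) * N * (K + 1) < q * (K + 1) by rewrite ltr_pM2r. move: h3; rewrite -/mu mulrBl mulrBl (mulrAC inv) h1 mul1r; nra.
set z := x *m C.
have zP : z *m P = x by rewrite /z -mulmxA PC mulmx1.
have Qz : form P z z = form C^T x x by rewrite /form zP /z trmx_mul !mulmxA.
have Qzx : form P z x = nrm x by rewrite /form zP.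
have Qxz : form P x z = nrm x by rewrite form_sym.
have := Pneg (z + (K + 1) *: x).
rewrite formDl !formDr !formZl !formZr Qz Qzx Qxz.
have := HK x; rewrite ler_norml => /andP [H1 _].
nra.
Qed.
Lemma rho_mu : rho B = mu.
Proof.
rewrite /rho; apply/eqP; rewrite eq_le; apply/andP; split.
  by apply: ge_sup; [exists mu; exact: mu_eig | move=> a /= /eig_le].
apply: sup_upper_bound => //=; first by split; [exists mu; exact: mu_eig | exists mu => a /= /eig_le].
exact: mu_eig.
Qed.
End Ray.



Section Graph.
Variable R : realType.
Variable s : R.

Definition hh (a b : R) := s ^+ 2 * a ^+ 2 + s ^+ 2 * b ^+ 2 - 2 * s * (a * b).
Definition TT k (e : rel 'I_k) (y : 'I_k -> R) :=
  \sum_i \sum_j (e i j)%:R * hh (y i) (y j).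

Lemma deg_sum k (e : rel 'I_k) i : (deg e i)%:R = \sum_j (e i j)%:R :> R.
Proof.
rewrite /deg -sumr_const big_mkcond /=; apply: eq_bigr => j _.
by rewrite inE; case: (e i j).
Qed.

Lemma Qgraph k (e : rel 'I_k) (x : 'rV[R]_k) : symmetric e ->
  2 * form (deformed_laplacian e s) x x
  = 2 * (1 - s ^+ 2) * nrm x + TT e (fun i => x 0 i).
Proof.
move=> se.
have A1 : form (adjmx R e) x x = \sum_i \sum_j (e i j)%:R * (x 0 i * x 0 j).
  rewrite formE exchange_big; apply: eq_bigr => i _; apply: eq_bigr => j _.
  by rewrite mxE; ring.
have D1 : form (degmx R e) x x = \sum_i \sum_j (e i j)%:R * x 0 i ^+ 2.
  rewrite formE; apply: eq_bigr => i _.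
  rewrite (bigD1 i) //= [X in _ + X]big1; last first.
    by move=> j ji; rewrite mxE (negbTE ji) mul0r mulr0 mul0r.
  rewrite mxE eqxx addr0 deg_sum mul1r mulrAC -expr2 mulr_sumr; apply: eq_bigr => j _; ring.
have D2 : \sum_i \sum_j (e i j)%:R * x 0 j ^+ 2 = \sum_i \sum_j (e i j)%:R * x 0 i ^+ 2 :> R.
  by rewrite exchange_big; apply: eq_bigr => i _; apply: eq_bigr => j _; rewrite se.
have TE : TT e (fun i => x 0 i) = s ^+ 2 * (\sum_i \sum_j (e i j)%:R * x 0 i ^+ 2)
    + s ^+ 2 * (\sum_i \sum_j (e i j)%:R * x 0 j ^+ 2)
    - 2 * s * (\sum_i \sum_j (e i j)%:R * (x 0 i * x 0 j)).
  rewrite !mulr_sumr -big_split -sumrB /=; apply: eq_bigr => i _.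
  rewrite !mulr_sumr -big_split -sumrB /=; apply: eq_bigr => j _.
  rewrite /hh; ring.
rewrite TE D2 /deformed_laplacian !formDm formNm !formZm formDm formNm A1 D1 form1 -/(nrm x).
ring.
Qed.

End Graph.



Section Emb.
Variable R : realType.
Variables (k n : nat) (f : 'I_k -> 'I_n).
Hypothesis finj : injective f.

Lemma sum_split (F : 'I_n -> R) :
  \sum_j F j = \sum_a F (f a) + \sum_(j | j \notin [set f a | a in 'I_k]) F j.
Proof.
rewrite -(big_imset _ (in2W finj)) /= (bigID (mem [set f a | a in 'I_k])) /=.
by congr (_ + _); apply: eq_bigl => j; rewrite andTb.
Qed.

Lemma sum_inj_le (F : 'I_n -> R) : (forall j, 0 <= F j) -> \sum_a F (f a) <= \sum_j F j.
Proof. by move=> F0; rewrite sum_split lerDl sumr_ge0. Qed.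

Lemma sum_inj_eq (F : 'I_n -> R) : (forall j, (forall a, f a != j) -> F j = 0) ->
  \sum_a F (f a) = \sum_j F j.
Proof.
move=> F0; rewrite [RHS]sum_split [X in _ = _ + X]big1 ?addr0 // => j /imsetP nj; apply: F0 => a.
by apply/eqP => faj; apply: nj; exists a.
Qed.

Definition wv (y : 'I_k -> R) : 'rV[R]_n :=
  \row_j (if [pick a | f a == j] is Some a then y a else 0).

Lemma wv_f y a : wv y 0 (f a) = y a.
Proof.
rewrite mxE; case: pickP => [b /eqP /finj -> // | /(_ a)]; by rewrite eqxx.
Qed.

Lemma wv_out y j : (forall a, f a != j) -> wv y 0 j = 0.
Proof. by move=> H; rewrite mxE; case: pickP => // b; rewrite (negbTE (H b)). Qed.

Lemma wv_cases y j : wv y 0 j = 0 \/ exists a, wv y 0 j = y a.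
Proof. rewrite mxE; case: pickP => [b _|_]; [right; exists b | left] => //. Qed.

End Emb.

Lemma dl_sym (R : realType) n (e : rel 'I_n) (s : R) : symmetric e ->
  (deformed_laplacian e s)^T = deformed_laplacian e s.
Proof.
move=> se; rewrite /deformed_laplacian !linearD !linearN !linearZ /= tr_scalar_mx.
have -> : (adjmx R e)^T = adjmx R e by apply/matrixP => i j; rewrite !mxE se.
have -> : (degmx R e)^T = degmx R e.
  by apply/matrixP => i j; rewrite !mxE eq_sym; case: eqVneq => [->|]; rewrite ?mul0r.
by [].
Qed.

Unset Implicit Arguments.
Theorem corollary3p5 (R : realType) (n m : nat) (e : rel 'I_n) (e' : rel 'I_m)
    (f : 'I_m -> 'I_n) :
  simple_graph e -> simple_graph e' -> subgraph_via e e' f -> (0 < m)%N ->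
  forall s : R, s <= 0 \/ 1 <= s ->
  rho (deformed_laplacian e' s) <= rho (deformed_laplacian e s).
Proof.
move=> [_ se] [_ se'] [finj fe] m0 s hs.
have n0 : (0 < n)%N := leq_ltn_trans (leq0n _) (ltn_ord (f (Ordinal m0))).
rewrite (rho_mu n0 (dl_sym s se)) (rho_mu m0 (dl_sym s se')).
set M := deformed_laplacian e s; set M' := deformed_laplacian e' s.
apply: ge_sup; first by case: (RS_sup m0 M').
move=> r [x x0 ->]; have N0 := nrm_gt0 x0; rewrite ler_pdivrMr //.
have [y [Qp [Hy1 Hy2 Q0 Qy Qh]]] : exists (y : 'I_m -> R) (Qp : R -> Prop),
   [/\ forall a, y a ^+ 2 = x 0 a ^+ 2,
       forall a b, hh s (x 0 a) (x 0 b) <= hh s (y a) (y b),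
       Qp 0, forall a, Qp (y a) & forall a b, Qp a -> Qp b -> 0 <= hh s a b].
  case: hs => hs.
    exists (fun a => `|x 0 a|), (fun a => 0 <= a); split => //.
    - by move=> a; rewrite real_normK // num_real.
    - move=> a b; rewrite /hh !real_normK ?num_real //.
      have := ler_norm (x 0 a * x 0 b); rewrite normrM; nra.
    - move=> a b ha hb; rewrite /hh.
      have h0 : 0 <= - s by rewrite oppr_ge0.
      have := mulr_ge0 (mulr_ge0 ha hb) h0; have := sqr_ge0 (s * a); have := sqr_ge0 (s * b).
      rewrite !exprMn; nra.
  exists (fun a => x 0 a), (fun _ => True); split => // a b _ _; rewrite /hh.
  have := sqr_ge0 (a - b); rewrite sqrrB => h.
  have h1 : 0 <= s ^+ 2 - s by rewrite expr2; nra.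
  nra.
set w := wv f y.
have Nw : nrm w = nrm x.
  rewrite !nrmE -(@sum_inj_eq _ _ _ f finj (fun j => w 0 j ^+ 2)).
    by apply: eq_bigr => a _; rewrite /w (wv_f finj) Hy1.
  by move=> j H; rewrite /w wv_out // expr0n.
have Qw : forall j, Qp (w 0 j) by move=> j; case: (wv_cases f y j) => [->|[a ->]].
have T1 : TT s e' (fun i => x 0 i) <= TT s e (fun i => w 0 i).
  apply: (@le_trans _ _ (\sum_a \sum_b (e (f a) (f b))%:R * hh s (w 0 (f a)) (w 0 (f b)))).
    apply: ler_sum => a _; apply: ler_sum => b _; rewrite /w !(wv_f finj).
    have hb := Qh _ _ (Qy a) (Qy b).
    have : (e' a b)%:R <= (e (f a) (f b))%:R :> R.
      by case E: (e' a b); rewrite ?ler0n // (fe _ _ E).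
    move=> he; apply: (le_trans (y := (e' a b)%:R * hh s (y a) (y b))).
      by rewrite ler_wpM2l // ler0n.
    by rewrite ler_wpM2r.
  rewrite /TT; apply: (le_trans (y := \sum_a \sum_j (e (f a) j)%:R * hh s (w 0 (f a)) (w 0 j))).
    apply: ler_sum => a _; apply: (sum_inj_le finj (F := fun j => _)) => j.
    by rewrite mulr_ge0 ?ler0n // Qh.
  apply: (sum_inj_le finj (F := fun i => \sum_j _)) => i.
  by rewrite sumr_ge0 // => j _; rewrite mulr_ge0 ?ler0n // Qh.
have := Qgraph s x se'; have := Qgraph s w se; rewrite -/M -/M' Nw.
have := le_mu n0 M w; rewrite Nw.
lra.
Qed.
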